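(* Let $\omega\in\mathbb{F}_8$ be a root of $y^3+y+1$, let $m\in\mathbb{N}$, let $\emptyset\neq L\subsetneq[m]$, let $D=\Delta_L+\omega\Delta_L+\omega^2\Delta_L\subseteq\mathbb{F}_8^m$ and $D^c=\mathbb{F}_8^m\setminus D$. Then $C_{D^c}$ is a $2$-weight linear code over $\mathbb{F}_8$ of length $2^{3m}-2^{3|L|}$, dimension $m$ and minimum distance $7\cdot2^{3(m-1)}-7\cdot2^{3(|L|-1)}$; its codewords have weights $0$, $7\cdot2^{3(m-1)}-7\cdot2^{3(|L|-1)}$ and $7\cdot2^{3(m-1)}$. Moreover, $C_{D^c}$ is a Griesmer code and hence distance optimal, and it is a minimal code if $3(m-|L|)-4\ge0$.
   Context: $[m]=\{1,\dots,m\}$; $\Delta_L=\{w\in\mathbb{F}_2^m:\{i:w_i\ne0\}\subseteq L\}$. $A+\omega B+\omega^2C=\{a+\omega b+\omega^2c: a\in A,b\in B,c\in C\}$. For an ordered finite set $P\subseteq\mathbb{F}_8^m$, $C_P=\{(v\cdot d)_{d\in P}: v\in\mathbb{F}_8^m\}$. An $l$-weight code has exactly $l$ distinct nonzero Hamming weights. An $[n,k,d]$ code over $\mathbb{F}_q$ is Griesmer if $\sum_{i=0}^{k-1}\lceil d/q^i\rceil=n$, and distance optimal if no $[n,k,d+1]$ linear code over $\mathbb{F}_q$ exists. A code is minimal if for every nonzero codeword $c$, each nonzero codeword $c'$ with $\mathrm{Supp}(c')\subseteq\mathrm{Supp}(c)$ is a scalar multiple of $c$. *)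

(* Defs.v *)
From HB Require Import structures.
From mathcomp Require Import all_boot all_order all_algebra.
Set Implicit Arguments. Unset Strict Implicit. Unset Printing Implicit Defensive.
Import GRing.Theory.
Local Open Scope ring_scope.

Section Codes.
Variable F : finFieldType.

(* Delta_L : vectors of F_2^m (embedded in F^m via F_2 = {0,1} ⊆ F)
   whose support is contained in L. *)
Definition Delta (m : nat) (L : {set 'I_m}) : {set 'rV[F]_m} :=
  [set w : 'rV[F]_m | [forall i, (w 0 i == 0) || ((w 0 i == 1) && (i \in L))]].

Definition Dset (w : F) (m : nat) (L : {set 'I_m}) : {set 'rV[F]_m} :=
  [set v : 'rV[F]_m | [exists a in Delta L, exists b in Delta L, exists c in Delta L,
             v == a + w *: b + w ^+ 2 *: c]].

(* Generator matrix of C_P: column j is the j-th element of P (in enum order),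
   so that (v *m code_genmat P) = (v . d)_{d in P}. *)
Definition code_genmat (m : nat) (P : {set 'rV[F]_m}) : 'M[F]_(m, #|P|) :=
  \matrix_(i < m, j < #|P|) (enum_val j) 0 i.

Definition code (m : nat) (P : {set 'rV[F]_m}) : {set 'rV[F]_#|P|} :=
  [set v *m code_genmat P | v : 'rV[F]_m].

Definition wt (n : nat) (c : 'rV[F]_n) : nat := #|[set j | c 0 j != 0]|.

Definition supp (n : nat) (c : 'rV[F]_n) : {set 'I_n} := [set j | c 0 j != 0].

Definition nz_weights_are (n : nat) (C : {set 'rV[F]_n}) (ws : seq nat) : Prop :=
  forall k : nat, k \in ws <-> exists2 c, c \in C & (c != 0) && (wt c == k).

Definition is_min_dist (n : nat) (C : {set 'rV[F]_n}) (d : nat) : Prop :=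
  (exists2 c, c \in C & (c != 0) && (wt c == d)) /\
  (forall c, c \in C -> c != 0 -> (d <= wt c)%N).

(* Griesmer bound met with equality: sum_{i<k} ceil(d/q^i) = n *)
Definition griesmer (n k d q : nat) : Prop :=
  (\sum_(i < k) ((d + q ^ i - 1) %/ q ^ i) = n)%N.

(* No [n,k,d+1] linear code over F exists; a k-dimensional linear code of
   length n is the row space of a k x n matrix of rank k. *)
Definition distance_optimal (n k d : nat) : Prop :=
  ~ exists G : 'M[F]_(k, n),
      \rank G = k /\ is_min_dist [set v *m G | v : 'rV[F]_k] d.+1.

Definition minimal_code (n : nat) (C : {set 'rV[F]_n}) : Prop :=
  forall c, c \in C -> c != 0 ->
  forall c', c' \in C -> c' != 0 -> supp c' \subset supp c ->
  exists a : F, c' = a *: c.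

End Codes.

(* Main.v *)
Require Import Defs.
From HB Require Import structures.
From mathcomp Require Import all_boot all_order all_algebra all_field.
From mathcomp Require Import ring zify.
Set Implicit Arguments. Unset Strict Implicit. Unset Printing Implicit Defensive.
Import GRing.Theory.
Local Open Scope ring_scope.

Section Count.
Variable F : finFieldType.
Definition Dsupp m (L : {set 'I_m}) : {set 'rV[F]_m} :=
  [set v : 'rV[F]_m | [forall i, (i \notin L) ==> (v 0 i == 0)]].

Lemma count_lin k (S : {set 'rV[F]_k}) (u : 'cV[F]_k) (y0 : 'rV_k) :
 (forall x y, x \in S -> y \in S -> x + y \in S) ->
 (forall a x, x \in S -> a *: x \in S) ->
 y0 \in S -> (y0 *m u) 0 0 = 1 ->
 #|S| = muln #|F| #|[set x in S | (x *m u) 0 0 == 0]| /\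
 #|[set x in S | (x *m u) 0 0 != 0]| = muln (#|F|).-1 #|[set x in S | (x *m u) 0 0 == 0]|.
Proof.
move=> SD SZ Sy0 fy0.
set K := [set x in S | _]; set N := [set x in S | _].
have fl (x : 'rV[F]_k) (a : F) : ((x + a *: y0) *m u) 0 0 = (x *m u) 0 0 + a.
  rewrite mulmxDl -scalemxAl mxE [X in _ + X]mxE.
  by rewrite fy0 mulr1.
have eN : N = [set p.1 + p.2 *: y0 | p in setX K [set~ (0 : F)]].
  apply/setP=> z; rewrite inE; apply/andP/imsetP.
  - move=> [zS fz]; exists (z - ((z *m u) 0 0) *: y0, (z *m u) 0 0).
      rewrite inE /= !inE fz andbT; apply/andP; split.
        by apply: SD => //; rewrite -scaleN1r scalerA; apply: SZ.
      by rewrite -scaleNr fl addrN.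
    by rewrite /= subrK.
  - case=> [[x a]]; rewrite inE /= !inE => /andP[/andP[xS /eqP fx] a0] ->.
    by rewrite fl fx add0r a0 SD // SZ.
have -> : #|N| = (#|F|.-1 * #|K|)%N.
  rewrite eN card_in_imset; first by rewrite cardsX cardsC1 mulnC.
  case=> [x a] [x' a']; rewrite !inE /= => /andP[/andP[_ /eqP fx] _] /andP[/andP[_ /eqP fx'] _] e.
  have ea : a = a' by have := fl x a; rewrite e fl fx fx' !add0r.
  by rewrite ea in e *; move/addIr: e ->.
split=> //.
have := cardsID [set x | (x *m u) 0 0 == 0] S.
have -> : S :&: [set x | (x *m u) 0 0 == 0] = K by apply/setP=> x; rewrite !inE.
have -> : S :\: [set x | (x *m u) 0 0 == 0] = N by apply/setP=> x; rewrite !inE andbC.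
move=> <-; rewrite eN card_in_imset ?cardsX ?cardsC1.
  have : (0 < #|F|)%N by apply/card_gt0P; exists 0.
  case: #|F| => // n _ /=; rewrite mulSn mulnC //.
case=> [x a] [x' a']; rewrite !inE /= => /andP[/andP[_ /eqP fx] _] /andP[/andP[_ /eqP fx'] _] e.
have ea : a = a' by have := fl x a; rewrite e fl fx fx' !add0r.
by rewrite ea in e *; move/addIr: e ->.
Qed.
End Count.

Section F8.
Variable F : finFieldType.
Variable w : F.
Hypothesis cardF : #|F| = 8%N.
Hypothesis hw : w ^+ 3 + w + 1 = 0.

Lemma char2 : (2 \in [pchar F])%N.
Proof. by apply: (@card_finPcharP _ 2 3). Qed.

Definition b2F (b : bool) : F := if b then 1 else 0.
Definition fw (p : bool * bool * bool) : F := b2F p.1.1 + b2F p.1.2 * w + b2F p.2 * w ^+ 2.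

Lemma b2F_sub a b : b2F a - b2F b = b2F (a != b).
Proof. rewrite (GRing.subr_pchar2 char2); by case: a; case: b; rewrite /b2F ?addr0 ?add0r ?(addrr_pchar2 char2). Qed.

Lemma w_neq0 : w != 0.
Proof. apply/eqP=> h0; move: hw; rewrite h0 expr0n /= !add0r => /eqP; by rewrite oner_eq0. Qed.

Lemma w1_neq0 : 1 + w != 0.
Proof.
apply/eqP=> h0; have : w = 1 by rewrite -[w]addr0 -(addrr_pchar2 char2 1) addrA (addrC w) h0 add0r.
move=> e; move: hw; rewrite e expr1n (addrr_pchar2 char2) add0r => /eqP; by rewrite oner_eq0.
Qed.

Lemma w2_neq0 : 1 + w + w ^+ 2 != 0.
Proof.
apply/eqP=> h0.
have e : w = (w^+3 + w + 1) - (w + 1) * (1 + w + w ^+ 2) + 2%:R * (w ^+ 2 + w) by ring.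
move: e; rewrite hw h0 (pcharf0 char2) !mul0r mulr0 subr0 addr0 => e.
by move: w_neq0; rewrite e eqxx.
Qed.

Lemma fw_eq0 p : fw p = 0 -> p = (false, false, false).
Proof.
case: p => [[a b] c]; rewrite /fw /b2F /=.
have w2 : w ^+ 2 != 0 by rewrite expf_neq0 // w_neq0.
have h1 : 1 + w ^+ 2 != 0.
  have -> : 1 + w ^+ 2 = (1 + w) ^+ 2 - 2%:R * w by ring.
  by rewrite (pcharf0 char2) mul0r subr0 expf_neq0 // w1_neq0.
have h2 : w + w ^+ 2 != 0 by rewrite (_ : w + w ^+ 2 = w * (1 + w)); [rewrite mulf_neq0 // ?w_neq0 ?w1_neq0 | ring].
case: a; case: b; case: c; rewrite ?mul1r ?mul0r ?addr0 ?add0r => // /eqP;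
  rewrite ?(negbTE w_neq0) ?(negbTE w1_neq0) ?(negbTE w2_neq0) ?oner_eq0 ?(negbTE w2) ?(negbTE h1) ?(negbTE h2) //.
Qed.

Lemma fw_inj : injective fw.
Proof.
move=> [[a b] c] [[a' b'] c'] e.
have : fw ((a != a'), (b != b'), (c != c')) = 0.
  have -> : fw ((a != a'), (b != b'), (c != c')) = fw (a, b, c) - fw (a', b', c').
    rewrite /fw /= -!b2F_sub; ring.
  by rewrite e subrr.
move/fw_eq0 => [] /negbFE/eqP-> /negbFE/eqP-> /negbFE/eqP->. done.
Qed.

Lemma fw_surj x : exists p, fw p = x.
Proof.
have : [set fw p | p in [set: bool * bool * bool]] = [set: F].
  apply/eqP; rewrite eqEcard subsetT /= card_imset; last exact: fw_inj.
  by rewrite !cardsT !card_prod !card_bool cardF.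
move=> e; have : x \in [set fw p | p in [set: bool * bool * bool]] by rewrite e inE.
by case/imsetP=> p _ ->; exists p.
Qed.

Definition dec (x : F) := odflt (false, false, false) [pick p | fw p == x].

Lemma decK x : fw (dec x) = x.
Proof.
rewrite /dec; case: pickP => [p /eqP //|h].
by have [p e] := fw_surj x; move: (h p); rewrite e eqxx.
Qed.

Lemma dec0 : dec 0 = (false, false, false).
Proof. by apply: fw_inj; rewrite decK /fw /b2F /= !mul0r !addr0. Qed.


Lemma Dset_eq m (L : {set 'I_m}) : Dset w L = Dsupp F L.
Proof.
apply/setP=> v; rewrite !inE; apply/idP/idP.
- case/existsP=> a /andP[aD /existsP[b /andP[bD /existsP[c /andP[cD /eqP ->]]]]].
  apply/forallP=> i; apply/implyP=> iL.
  move: aD bD cD; rewrite !inE => /forallP/(_ i) ha /forallP/(_ i) hb /forallP/(_ i) hc.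
  move: ha hb hc; rewrite (negbTE iL) !andbF !orbF => /eqP ha /eqP hb /eqP hc.
  by rewrite !mxE ha hb hc !mulr0 !addr0.
- move=> /forallP hv.
  pose a := \row_i b2F (dec (v 0 i)).1.1.
  pose b := \row_i b2F (dec (v 0 i)).1.2.
  pose c := \row_i b2F (dec (v 0 i)).2.
  have inD (g : bool * bool * bool -> bool) : g (false, false, false) = false ->
     (\row_i b2F (g (dec (v 0 i)))) \in @Delta F m L.
    move=> g0; rewrite inE; apply/forallP=> i; rewrite mxE.
    case: (boolP (i \in L)) => iL.
      by rewrite andbT /b2F; case: (g _); rewrite eqxx ?orbT.
    by move: (hv i); rewrite iL /= => /eqP ->; rewrite dec0 g0 /b2F eqxx.
  apply/existsP; exists a; rewrite (inD (fun p => p.1.1)) //=.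
  apply/existsP; exists b; rewrite (inD (fun p => p.1.2)) //=.
  apply/existsP; exists c; rewrite (inD (fun p => p.2)) //=.
  apply/eqP/rowP=> i; rewrite !mxE -[LHS]decK /fw.
  by rewrite (mulrC w) (mulrC (w ^+ 2)).
Qed.

End F8.

Section C.
Variable F : finFieldType.

Lemma wt_code m (P : {set 'rV[F]_m}) (v : 'rV[F]_m) :
  wt (v *m code_genmat P) = #|[set d in P | (d *m v^T) 0 0 != 0]|.
Proof.
rewrite /wt.
have fe j : (v *m code_genmat P) 0 j = (enum_val j *m v^T) 0 0.
  rewrite !mxE; apply: eq_bigr => i _; rewrite !mxE mulrC //.
have -> : [set d in P | (d *m v^T) 0 0 != 0] =
   enum_val @: [set j | (v *m code_genmat P) 0 j != 0].
  apply/setP=> d; rewrite inE; apply/andP/imsetP.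
  - move=> [dP fd]; exists (enum_rank_in dP d); last by rewrite enum_rankK_in.
    by rewrite inE fe enum_rankK_in.
  - by case=> j; rewrite inE fe => fj ->; rewrite enum_valP.
by rewrite card_imset //; apply: enum_val_inj.
Qed.

Lemma count_S k n (S : {set 'rV[F]_k}) (u : 'cV[F]_k) (y0 : 'rV_k) :
 (forall x y, x \in S -> y \in S -> x + y \in S) ->
 (forall a x, x \in S -> a *: x \in S) ->
 y0 \in S -> (y0 *m u) 0 0 != 0 -> #|S| = (#|F| ^ n)%N -> (0 < n)%N ->
 #|[set x in S | (x *m u) 0 0 != 0]| = muln #|F|.-1 (#|F| ^ n.-1).
Proof.
move=> SD SZ y0S fy0 cS n0.
set y1 := ((y0 *m u) 0 0)^-1 *: y0.
have y1S : y1 \in S by apply: SZ.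
have fy1 : (y1 *m u) 0 0 = 1 by rewrite -scalemxAl mxE mulVf.
have [h1 ->] := count_lin SD SZ y1S fy1; congr muln.
move: h1; rewrite cS; clear cS; case: n n0 => // n _ /=; rewrite expnS => /eqP.
by rewrite eqn_pmul2l ?card_gt0 //; [move/eqP | apply/card_gt0P; exists 0].
Qed.

Lemma Dsupp_add m (L : {set 'I_m}) x y : x \in Dsupp F L -> y \in Dsupp F L -> x + y \in Dsupp F L.
Proof.
rewrite !inE => /forallP hx /forallP hy; apply/forallP=> i; apply/implyP=> iL.
by move: (hx i) (hy i); rewrite iL /= mxE => /eqP-> /eqP->; rewrite addr0.
Qed.

Lemma Dsupp_scale m (L : {set 'I_m}) a x : x \in Dsupp F L -> a *: x \in Dsupp F L.
Proof.
rewrite !inE => /forallP hx; apply/forallP=> i; apply/implyP=> iL.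
by move: (hx i); rewrite iL /= mxE => /eqP->; rewrite mulr0.
Qed.

Lemma card_Dsupp m (L : {set 'I_m}) : #|Dsupp F L| = (#|F| ^ #|L|)%N.
Proof.
have -> : Dsupp F L = [set \row_i (g : {ffun 'I_m -> F}) i | g in pffun_on (0 : F) L [set: F]].
  apply/setP=> v; rewrite inE; apply/idP/imsetP.
  - move/forallP=> hv; exists [ffun i => v 0 i].
      apply/pffun_onP; split; last by move=> y _; rewrite inE.
      apply/subsetP=> i; rewrite !inE ffunE; apply: contraR => iL.
      by move: (hv i); rewrite iL.
    by apply/rowP=> i; rewrite !mxE ffunE.
  - case=> g /pffun_onP [sg _] ->; apply/forallP=> i; apply/implyP=> iL.
    rewrite mxE; apply: contraR iL => gi; apply: (subsetP sg); by rewrite inE.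
rewrite card_in_imset ?card_pffun_on ?cardsT //.
move=> g g' _ _ e; apply/ffunP=> i.
by have := congr1 (fun M : 'rV_m => M 0 i) e; rewrite /= !mxE.
Qed.

Lemma delta_f m (i : 'I_m) (v : 'rV[F]_m) : ((delta_mx 0 i : 'rV[F]_m) *m v^T) 0 0 = v 0 i.
Proof. by rewrite -rowE !mxE. Qed.

Lemma wt_formula m (L : {set 'I_m}) (v : 'rV[F]_m) : v != 0 ->
 #|[set d in ~: Dsupp F L | (d *m v^T) 0 0 != 0]| =
 (#|F|.-1 * #|F| ^ m.-1 -
   (if [exists i in L, (v 0 i != 0)%R] then #|F|.-1 * #|F| ^ #|L|.-1 else 0))%N.
Proof.
move=> v0.
have [i vi] : exists i, v 0 i != 0.
  case: (pickP (fun i => v 0 i != 0)) => [i hi|h]; first by exists i.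
  have e : v = 0 by apply/rowP=> k; rewrite mxE; apply/eqP; apply/negbFE; exact: (h k).
  by rewrite e eqxx in v0.
have e1 : [set d in ~: Dsupp F L | (d *m v^T) 0 0 != 0] =
   [set d in [set: 'rV_m] | (d *m v^T) 0 0 != 0] :\: [set d in Dsupp F L | (d *m v^T) 0 0 != 0].
  by apply/setP=> d; rewrite !inE; case: [forall _, _]; case: (_ != 0).
rewrite e1 cardsD.
have -> : [set d in [set: 'rV_m] | (d *m v^T) 0 0 != 0] :&: [set d in Dsupp F L | (d *m v^T) 0 0 != 0]
   = [set d in Dsupp F L | (d *m v^T) 0 0 != 0].
  by apply/setIidPr/subsetP=> d; rewrite !inE => /andP[].
rewrite (count_S (S:=[set: 'rV_m]) (u:=v^T) (n:=m) (y0:=delta_mx 0 i)) ?inE ?delta_f ?cardsT ?card_mx ?mul1n //; last first.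
  by case: m i v v0 vi {e1} L => [[]|].
1,2: by move=> *; rewrite inE.
case: ifP => [/existsP[j /andP[jL vj]]|/negbT hn].
  rewrite (count_S (S:=Dsupp F L) (u:=v^T) (n:=#|L|) (y0:=delta_mx 0 j)) ?delta_f ?card_Dsupp //.
  - exact: Dsupp_add.
  - exact: Dsupp_scale.
  - rewrite inE; apply/forallP=> k; apply/implyP=> kL; rewrite mxE.
    by rewrite eqxx /=; case: (k =P j) => [ek|_]; [move: kL; rewrite ek jL | ].
  - by apply/card_gt0P; exists j.
have -> : [set d in Dsupp F L | (d *m v^T) 0 0 != 0] = set0.
  apply/setP=> d; rewrite !inE; apply/negP=> /andP[/forallP hd].
  rewrite mxE big1 ?eqxx // => k _; rewrite mxE.
  case: (boolP (k \in L)) => kL.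
    by move: hn; rewrite negb_exists => /forallP/(_ k); rewrite kL /= negbK => /eqP->; rewrite mulr0.
  by move: (hd k); rewrite kL /= => /eqP->; rewrite mul0r.
by rewrite cards0 subn0.
Qed.

End C.

Section Gen.
Variable F : finFieldType.

Lemma card_sum (T : finType) (P : pred T) : #|[set x | P x]| = (\sum_x (P x : nat))%N.
Proof.
rewrite -sum1_card big_mkcond; apply: eq_bigr => x _; rewrite inE; by case: (P x).
Qed.

Lemma sum_const_nz (n : nat) (T : finType) (z : T) : (\sum_(x | x != z) n)%N = (#|T|.-1 * n)%N.
Proof. by rewrite sum_nat_const -(cardC1 z). Qed.

Lemma colf k N (G : 'M[F]_(k, N)) (v : 'rV[F]_k) j : (v *m G) 0 j = (v *m col j G) 0 0.
Proof. by rewrite !mxE; apply: eq_bigr => i _; rewrite !mxE. Qed.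

Lemma delta_g k (i : 'I_k) (u : 'cV[F]_k) : ((delta_mx 0 i : 'rV[F]_k) *m u) 0 0 = u i 0.
Proof. by rewrite -rowE !mxE. Qed.

Lemma plotkin k N (G : 'M[F]_(k, N)) d' : \rank G = k ->
  is_min_dist [set v *m G | v : 'rV_k] d' ->
  ((#|F| ^ k).-1 * d' <= N * (#|F|.-1 * #|F| ^ k.-1))%N.
Proof.
move=> rG [_ hmin].
have rf : row_free G by rewrite /row_free rG.
have step1 : (\sum_(v : 'rV_k) wt (v *m G) <= N * (#|F|.-1 * #|F| ^ k.-1))%N.
  rewrite /wt; under eq_bigr => v _ do rewrite card_sum.
  rewrite exchange_big /=.
  apply: leq_trans (_ : (\sum_(j : 'I_N) (#|F|.-1 * #|F| ^ k.-1) <= _)%N); last first.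
    by rewrite sum_nat_const card_ord.
  apply: leq_sum => j _; rewrite -card_sum.
  case: (pickP (fun i => col j G i 0 != 0)) => [i ui|h].
    have -> : [set x | (x *m G) 0 j != 0] = [set x in [set: 'rV_k] | (x *m col j G) 0 0 != 0].
      by apply/setP=> x; rewrite !inE colf.
    rewrite (count_S (n:=k) (y0:=delta_mx 0 i)) ?inE ?delta_g ?cardsT ?card_mx ?mul1n //.
    1,2: by move=> *; rewrite inE.
    by case: k i {rf rG hmin G ui} => [[]|].
  have -> : [set x : 'rV[F]_k | (x *m G) 0 j != 0] = set0.
    apply/setP=> x; rewrite !inE colf mxE big1 ?eqxx // => i _.
    by move: (h i) => /negbFE/eqP->; rewrite mulr0.
  by rewrite cards0.
apply: leq_trans step1.
rewrite (bigD1 0) //=; apply: leq_trans (leq_addl _ _).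
apply: (@leq_trans (\sum_(v : 'rV[F]_k | v != 0) d')).
  by rewrite sum_const_nz card_mx mul1n.
apply: leq_sum => v v0.
apply: hmin; first by apply/imsetP; exists v.
by rewrite mulmx_free_eq0.
Qed.

Lemma minimal_gen k N (G : 'M[F]_(k, N)) (d W : nat) :
  (forall c, c \in [set v *m G | v : 'rV_k] -> c != 0 -> (d <= wt c <= W)%N) ->
  (#|F|.-1 * W < #|F| * d)%N ->
  minimal_code [set v *m G | v : 'rV_k].
Proof.
move=> hw hq c cC c0 c' c'C c'0 sub.
case: (pickP (fun a => c' == a *: c)) => [a /eqP e|h]; first by exists a.
exfalso.
case/imsetP: (cC) => v _ ev; case/imsetP: (c'C) => u _ eu.
pose e l := c - l *: c'.
have eC l : e l \in [set v *m G | v : 'rV_k].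
  by apply/imsetP; exists (v - l *: u) => //; rewrite /e ev eu mulmxBl -scalemxAl.
have e0 l : l != 0 -> e l != 0.
  move=> l0; apply/negP=> /eqP /eqP; rewrite /e subr_eq0 => /eqP ec.
  by move: (h l^-1); rewrite ec scalerA mulVf // scale1r eqxx.
pose Z l := [set j | (c' 0 j != 0) && (c 0 j == l * c' 0 j)].
have key l : (wt (e l) + #|Z l| = wt c)%N.
  have ZS : Z l \subset [set j | c 0 j != 0].
    apply/subsetP=> j; rewrite !inE => /andP[cj _].
    by move/subsetP: sub => /(_ j); rewrite !inE; apply.
  have -> : wt (e l) = #|[set j | c 0 j != 0] :\: Z l|.
    rewrite /wt; apply: eq_card=> j; rewrite !inE /e !mxE.
    case: (boolP (c' 0 j != 0)) => cj /=.
      have cj0 : c 0 j != 0 by move/subsetP: sub => /(_ j); rewrite !inE; apply.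
      by rewrite cj0 andbT subr_eq0.
    by move: cj => /negbNE/eqP->; rewrite mulr0 subr0.
  by rewrite cardsD (setIidPr ZS) subnK // subset_leq_card.
have sumZ : (wt c' <= \sum_l #|Z l|)%N.
  rewrite /wt card_sum /Z.
  rewrite (eq_bigr (fun l : F => (\sum_(j : 'I_N) nat_of_bool ((c' ord0 j != 0%R) && (c ord0 j == (l * c' ord0 j)%R)))%N)); last by move=> l _; rewrite card_sum.
  rewrite exchange_big /=; apply: leq_sum => j _.
  case: (boolP (c' 0 j != 0)) => cj //=.
  by rewrite (bigD1 (c 0 j / c' 0 j)) //= divfK // eqxx.
have sumE : (\sum_l (wt (e l) + #|Z l|) = #|F| * wt c)%N.
  by under eq_bigr => l _ do rewrite key; rewrite sum_nat_const.
have lowb : (wt c + #|F|.-1 * d <= \sum_l wt (e l))%N.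
  rewrite (bigD1 0) //= /e scale0r subr0 leq_add2l -(sum_const_nz d (0 : F)).
  apply: leq_sum => l l0; by have /andP[] := hw _ (eC l) (e0 l l0).
have /andP[dc' _] := hw _ c'C c'0.
have /andP[_ cW] := hw _ cC c0.
move: sumE; rewrite big_split /= => sumE.
have : (#|F| * wt c >= wt c + #|F|.-1 * d + d)%N.
  rewrite -sumE; apply: leq_add => //; exact: leq_trans dc' sumZ.
have : (0 < #|F|)%N by apply/card_gt0P; exists 0.
move: hq; case: #|F| => // q /=; nia.
Qed.

End Gen.
Local Open Scope nat_scope.
Lemma geom8 n : (\sum_(i < n) 7 * 8 ^ (n - 1 - i) = 8 ^ n - 1)%N.
Proof.
elim: n => [|n IH]; first by rewrite big_ord0.
rewrite big_ord_recl /=.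
rewrite (eq_bigr (fun i : 'I_n => 7 * 8 ^ (n - 1 - i))%N); last first.
  by move=> i _; congr (7 * 8 ^ _); rewrite /bump leq0n add1n; lia.
rewrite IH subn1 /= subn0 expnS; have := expn_gt0 8 n; lia.
Qed.

Lemma pow8_le a b : (a <= b)%N -> (8 ^ a <= 8 ^ b)%N.
Proof. by move=> h; rewrite leq_pexp2l. Qed.

Lemma griesmer_arith m l : (0 < l)%N -> (l < m)%N ->
  (\sum_(i < m) ((7 * 8 ^ (m - 1) - 7 * 8 ^ (l - 1) + 8 ^ i - 1) %/ 8 ^ i) = 8 ^ m - 8 ^ l)%N.
Proof.
move=> l0 lm.
have term (i : 'I_m) : ((7 * 8 ^ (m - 1) - 7 * 8 ^ (l - 1) + 8 ^ i - 1) %/ 8 ^ i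
     + (if (i < l)%N then 7 * 8 ^ (l - 1 - i) else 0) = 7 * 8 ^ (m - 1 - i))%N.
  have im := ltn_ord i.
  have P0 := expn_gt0 8 i.
  set P := (8 ^ i)%N in P0 *.
  have hA : (8 ^ (m - 1) = P * 8 ^ (m - 1 - i))%N by rewrite -expnD; congr (8 ^ _); lia.
  set a := (8 ^ (m - 1 - i))%N in hA *.
  case: ifP => il.
    have hB : (8 ^ (l - 1) = P * 8 ^ (l - 1 - i))%N by rewrite -expnD; congr (8 ^ _); lia.
    set b := (8 ^ (l - 1 - i))%N in hB *.
    have ba : (b <= a)%N by apply: pow8_le; lia.
    have e : (7 * 8 ^ (m - 1) - 7 * 8 ^ (l - 1) + P - 1 = (7 * a - 7 * b) * P + (P - 1))%N.
      rewrite hA hB; have := leq_mul (leqnn P) ba; rewrite mulnBl.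
      have -> : (7 * a * P = 7 * (P * a))%N by ring.
      have -> : (7 * b * P = 7 * (P * b))%N by ring.
      lia.
    rewrite e divnMDl // divn_small; [lia | lia].
  have hB : (8 * 8 ^ (l - 1) <= P)%N.
    rewrite -expnS; apply: pow8_le; lia.
  have a1 : (1 <= a)%N by rewrite expn_gt0.
  have e : (7 * 8 ^ (m - 1) - 7 * 8 ^ (l - 1) + P - 1 = (7 * a) * P + (P - 1 - 7 * 8 ^ (l - 1)))%N.
    rewrite hA; have := leq_mul (leqnn P) a1; rewrite muln1.
    have -> : (7 * a * P = 7 * (P * a))%N by ring.
    lia.
  rewrite e divnMDl // divn_small; [lia | lia].
have hs : (\sum_(i < m) ((7 * 8 ^ (m - 1) - 7 * 8 ^ (l - 1) + 8 ^ i - 1) %/ 8 ^ i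
     + (if (i < l)%N then 7 * 8 ^ (l - 1 - i) else 0)) = 8 ^ m - 1)%N.
  by rewrite -geom8; apply: eq_bigr => i _; exact: term.
rewrite big_split /= in hs.
move: hs.
rewrite -big_mkcond -(big_ord_widen _ (fun i => 7 * 8 ^ (l - 1 - i))%N (ltnW lm)) geom8.
have : (0 < 8 ^ l)%N by rewrite expn_gt0.
have := pow8_le (ltnW lm); move: (\sum_(i < m) _)%N => S; lia.
Qed.
Lemma ar_pos A B : 8 * B <= A -> 0 < B -> 0 < 7 * A - 7 * B.
Proof. lia. Qed.
Lemma ar_lt A B : 8 * B <= A -> 0 < B -> 7 * A - 7 * B != 7 * A.
Proof. lia. Qed.
Lemma ar_plot b x : 0 < b -> 8 <= x ->
  ~~ ((8 * (b * x)).-1 * (7 * (b * x) - 7 * b).+1 <= (8 * (b * x) - 8 * b) * (7 * (b * x))).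
Proof. move=> b0 x8; apply/negP=> h. nia. Qed.
Lemma ar_min b x : 0 < b -> 64 <= x -> 7 * (7 * (b * x)) < 8 * (7 * (b * x) - 7 * b).
Proof. move=> b0 x8. nia. Qed.
Local Open Scope ring_scope.

Unset Implicit Arguments.

Theorem mainTheorem7 (F : finFieldType) (w : F) (m : nat) (L : {set 'I_m}) :
  #|F| = 8%N ->
  w ^+ 3 + w + 1 = 0 ->
  L != set0 -> L != [set: 'I_m] ->
  let Dc := ~: Dset w L in
  let C := code Dc in
  let n := (2 ^ (3 * m) - 2 ^ (3 * #|L|))%N in
  let d := (7 * 2 ^ (3 * (m - 1)) - 7 * 2 ^ (3 * (#|L| - 1)))%N in
  [/\ #|Dc| = n,
      \rank (code_genmat Dc) = m /\ is_min_dist C d,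
      nz_weights_are C [:: d; (7 * 2 ^ (3 * (m - 1)))%N]
      /\ d != (7 * 2 ^ (3 * (m - 1)))%N,
      griesmer #|Dc| m d 8 /\ distance_optimal F #|Dc| m d
    & (4 <= 3 * (m - #|L|))%N -> minimal_code C].
Proof.
move=> cardF hw L0 LT Dc C n d.
have e8 k : (2 ^ (3 * k) = 8 ^ k)%N by rewrite expnM.
have l0 : (0 < #|L|)%N by rewrite card_gt0.
have lm : (#|L| < m)%N.
  by rewrite -[X in (_ < X)%N]card_ord -cardsT; apply: proper_card; rewrite properT.
have hD := Dset_eq cardF hw L.
have cardDc : #|Dc| = (8 ^ m - 8 ^ #|L|)%N.
  have := cardsC (Dsupp F L); rewrite card_Dsupp card_mx mul1n cardF /Dc hD; lia.
pose A := (8 ^ (m - 1))%N; pose B := (8 ^ (#|L| - 1))%N.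
pose X := (8 ^ (m - #|L|))%N.
have hAB : A = (B * X)%N by rewrite /A /B /X -expnD; congr (expn 8 _); lia.
have B1 : (1 <= B)%N by rewrite expn_gt0.
have X8 : (8 <= X)%N by rewrite /X -{1}(expn1 8) pow8_le //; lia.
have AB : (8 * B <= A)%N by rewrite hAB [(B * X)%N]mulnC leq_mul2r X8 orbT.
have hd : d = (7 * A - 7 * B)%N by rewrite /d !e8.
set G := code_genmat Dc.
have wtE (v : 'rV[F]_m) : v != 0 -> wt (v *m G) =
    (7 * A - (if [exists i in L, (v 0 i != 0)%R] then 7 * B else 0))%N.
  move=> v0; rewrite wt_code.
  have -> : [set x in Dc | (x *m v^T) 0 0 != 0] = [set x in ~: Dsupp F L | (x *m v^T) 0 0 != 0].
    by rewrite /Dc hD.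
  by rewrite wt_formula // cardF /A /B !subn1.
have wt0 : wt (0 : 'rV[F]_#|Dc|) = 0%N.
  by rewrite /wt; apply/eqP; rewrite cards_eq0; apply/eqP/setP=> j; rewrite !inE mxE eqxx.
have inj0 (v : 'rV[F]_m) : v *m G = 0 -> v = 0.
  move=> e; apply/eqP; apply/negPn/negP=> v0; move: (wtE v v0); rewrite e wt0.
  have p1 := ar_pos AB B1; have p2 : (0 < 7 * A)%N by apply: leq_trans p1 (leq_subr _ _).
  by case: ifP => _; rewrite ?subn0 => h; [rewrite -h in p1 | rewrite -h in p2].
have nzcw c : c \in C -> c != 0 -> wt c = (7 * A - 7 * B)%N \/ wt c = (7 * A)%N.
  case/imsetP=> v _ -> c0.
  have v0 : v != 0 by apply: contraNneq c0 => ->; rewrite mul0mx.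
  by rewrite wtE //; case: ifP => _; [left | right; rewrite subn0].
have [i0 i0L] : exists i, i \in L by apply/set0Pn.
have [j0 j0L] : exists j, j \notin L.
  case: (pickP (fun j => j \notin L)) => [j hj | h]; first by exists j.
  have eL : L = [set: 'I_m] by apply/setP=> j; rewrite inE; apply/negbFE; exact: (h j).
  by rewrite eL eqxx in LT.
have dnz (i : 'I_m) : (delta_mx 0 i : 'rV[F]_m) != 0.
  by apply/eqP=> /matrixP/(_ 0 i); rewrite !mxE !eqxx /= => /eqP; rewrite oner_eq0.
have cw1 : exists2 c, c \in C & (c != 0) && (wt c == d).
  exists ((delta_mx 0 i0 : 'rV[F]_m) *m G); first by apply/imsetP; exists (delta_mx 0 i0).
  rewrite wtE // hd.
  have -> : [exists i in L, (delta_mx 0 i0 : 'rV[F]_m) 0 i != 0].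
    by apply/existsP; exists i0; rewrite i0L !mxE !eqxx oner_eq0.
  rewrite eqxx andbT; apply/negP=> /eqP /inj0 /eqP; by rewrite (negbTE (dnz i0)).
have cw2 : exists2 c, c \in C & (c != 0) && (wt c == 7 * 2 ^ (3 * (m - 1)))%N.
  exists ((delta_mx 0 j0 : 'rV[F]_m) *m G); first by apply/imsetP; exists (delta_mx 0 j0).
  rewrite wtE // e8.
  have -> : [exists i in L, (delta_mx 0 j0 : 'rV[F]_m) 0 i != 0] = false.
    apply/negbTE; rewrite negb_exists; apply/forallP=> i; apply/negP=> /andP[iL].
    rewrite !mxE; case: (i =P j0) => [ei|_]; first by move: iL; rewrite ei (negbTE j0L).
    by rewrite andbF mulr0n eqxx.
  rewrite subn0 eqxx andbT; apply/negP=> /eqP /inj0 /eqP; by rewrite (negbTE (dnz j0)).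
split.
- by rewrite cardDc /n !e8.
- split.
    apply/eqP; rewrite -/(row_free G) -kermx_eq0; apply/eqP/row_matrixP=> i.
    by rewrite row0; apply: inj0; rewrite -row_mul mulmx_ker row0.
  split=> // c cC c0; rewrite hd; by case: (nzcw c cC c0) => ->; rewrite ?leq_subr.
- split; last by rewrite hd e8 ar_lt.
  move=> k; rewrite !inE; split.
    by case/orP=> /eqP ->.
  case=> c cC /andP[c0 /eqP <-]; case: (nzcw c cC c0) => ->.
    by rewrite hd eqxx.
  by rewrite e8 eqxx orbT.
- split.
    by rewrite /griesmer cardDc hd /A /B griesmer_arith.
  move=> [G' [rG' hmin]]; have := plotkin rG' hmin.
  rewrite cardF cardDc hd.
  have -> : (8 ^ m = 8 * A)%N by rewrite /A -expnS; congr (expn 8 _); lia.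
  have -> : (8 ^ #|L| = 8 * B)%N by rewrite /B -expnS; congr (expn 8 _); lia.
  have -> : (8 ^ m.-1 = A)%N by rewrite /A subn1.
  by rewrite hAB /=; apply/negP; exact: (ar_plot B1 X8).
- move=> hm; apply: (minimal_gen (d := (7 * A - 7 * B)%N) (W := (7 * A)%N)).
    by move=> c cC c0; case: (nzcw c cC c0) => ->; apply/andP; split; rewrite ?leq_subr ?leqnn.
  have X64 : (64 <= X)%N by rewrite /X (_ : 64 = 8 ^ 2)%N // pow8_le //; lia.
  by rewrite cardF hAB /=; exact: (ar_min B1 X64).
Qed.
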